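(* Let $m \ge 2$ and $n \ge 1$ be integers, let $K_m = (V, E)$ be the complete graph on $m$ vertices, and let $E = E_1 \cup \dots \cup E_n$ be a partition of its edge set into $n$ parts. Define the load balance $\alpha = \min_{i} \frac{|E_i| \cdot n}{|E|}$ and the replication factor $RF = \frac{\sum_{i=1}^n |V(E_i)|}{|V|}$, where $V(E_i)$ denotes the set of vertices incident to at least one edge of $E_i$. Then $$RF \ge \sqrt{\alpha} \cdot \sqrt{n} \cdot \sqrt{\frac{m-1}{m}}.$$ *)

(* Defs.v *)
From mathcomp Require Import all_boot all_order all_algebra.
From mathcomp Require Import all_classical all_reals.
Set Implicit Arguments. Unset Strict Implicit. Unset Printing Implicit Defensive.
Import Order.TTheory GRing.Theory Num.Theory.
Local Open Scope ring_scope.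

Definition Kedges (m : nat) : {set {set 'I_m}} := [set e : {set 'I_m} | #|e| == 2%N].

(* A partition of the edge set into n (labelled) parts E_0, ..., E_{n-1} is
   given by an assignment of a part index to every edge. *)
Definition part (m n : nat) (f : {set 'I_m} -> 'I_n) (i : 'I_n) : {set {set 'I_m}} :=
  [set e in Kedges m | f e == i].

Definition part_vertices (m n : nat) (f : {set 'I_m} -> 'I_n) (i : 'I_n) : {set 'I_m} :=
  \bigcup_(e in part f i) e.

Definition load (R : realType) (m n : nat) (f : {set 'I_m} -> 'I_n) (i : 'I_n) : R :=
  (#|part f i|%:R * n%:R) / #|Kedges m|%:R.

Definition load_balance (R : realType) (m n : nat) (hn : (0 < n)%N)
  (f : {set 'I_m} -> 'I_n) : R :=
  \big[Num.min/load R f (Ordinal hn)]_(i < n) load R f i.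

Definition replication_factor (R : realType) (m n : nat) (f : {set 'I_m} -> 'I_n) : R :=
  (\sum_(i < n) #|part_vertices f i|%:R) / m%:R.

(* Main.v *)
Require Import Defs.
From mathcomp Require Import all_boot all_order all_algebra.
From mathcomp Require Import all_classical all_reals.
From mathcomp Require Import ring lra.
Import Order.TTheory GRing.Theory Num.Theory.
Local Open Scope ring_scope.

Lemma part_bound (m n : nat) (f : {set 'I_m} -> 'I_n) (i : 'I_n) :
  (2 * #|part f i| <= #|part_vertices f i| ^ 2)%N.
Proof.
have H1 : (#|part f i| <= 'C(#|part_vertices f i|, 2))%N.
  rewrite -cards_draws; apply: subset_leq_card; apply/fintype.subsetP => e He.
  have He' := He; rewrite /part inE in He'; case/andP: He' => Hk _.
  rewrite inE; move: Hk; rewrite /Kedges inE => ->; rewrite andbT.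
  by apply: finset.bigcup_sup He.
set v := #|part_vertices f i| in H1 *.
apply: (leq_trans (leq_mul (leqnn 2) H1)).
have := mul_bin_diag v 1; rewrite bin1 => <-.
by rewrite expnS expn1 leq_mul // leq_pred.
Qed.

Lemma Kcard (R : realType) m : (1 <= m)%N -> (#|Kedges m|%:R *+ 2 : R) = m%:R * (m%:R - 1).
Proof.
move=> hm; rewrite /Kedges card_draws card_ord -mulr_natr -natrM mulnC -mul_bin_diag bin1.
by rewrite natrM -subn1 natrB.
Qed.

Theorem theorem3 (R : realType) (m n : nat) (hm : (2 <= m)%N) (hn : (0 < n)%N)
  (f : {set 'I_m} -> 'I_n) :
  replication_factor R f >=
    Num.sqrt (load_balance R hn f) * Num.sqrt (n%:R) * Num.sqrt ((m%:R - 1) / m%:R).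
Proof.
set L := load_balance R hn f.
set E : R := #|Kedges m|%:R.
have hm1 : (1 <= m)%N by apply: leq_trans hm.
have hmR : (0 : R) < m%:R by rewrite ltr0n; apply: leq_trans hm.
have hm1R : (1 : R) < m%:R by rewrite ltr1n.
have hnR : (0 : R) < n%:R by rewrite ltr0n.
have hE2 : E *+ 2 = m%:R * (m%:R - 1) by rewrite /E Kcard.
have hE : 0 < E.
  have : 0 < E *+ 2 by rewrite hE2 mulr_gt0 // subr_gt0.
  by rewrite -mulr_natr pmulr_lgt0.
have hL i : L <= load R f i by apply: bigmin_le.
set c := 2 * L * E / n%:R.
set v := fun i : 'I_n => (#|part_vertices f i|%:R : R).
have hv0 i : 0 <= v i by rewrite /v ler0n.
have hc i : c <= v i ^+ 2.
  have h1 : ((2 * #|part f i|)%N%:R : R) <= v i ^+ 2.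
    by rewrite /v -natrX ler_nat part_bound.
  apply: le_trans h1.
  have -> : ((2 * #|part f i|)%N%:R : R) = 2 * load R f i * E / n%:R.
    rewrite /load natrM; field.
    by rewrite gt_eqF //= gt_eqF.
  rewrite /c ler_pM2r ?invr_gt0 // ler_pM2r // ler_pM2l //.
rewrite /replication_factor.
have hlhs0 : 0 <= (\sum_(i < n) #|part_vertices f i|%:R) / (m%:R : R).
  by rewrite divr_ge0 // sumr_ge0 // => i _; rewrite ler0n.
case: (leP L 0) => hL0.
  have -> : Num.sqrt L = 0 by apply/eqP; rewrite sqrtr_eq0.
  by rewrite !mul0r.
have hc0 : 0 <= c by rewrite /c !mulr_ge0 ?invr_ge0 ?ltW.
have hvs i : Num.sqrt c <= v i.
  by rewrite -(ger0_norm (hv0 i)) -sqrtr_sqr ler_sqrt ?exprn_ge0 ?hc.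
have hsum : n%:R * Num.sqrt c <= \sum_(i < n) v i.
  have -> : n%:R * Num.sqrt c = \sum_(i < n) Num.sqrt c.
    by rewrite sumr_const card_ord mulr_natl.
  by apply: ler_sum => i _; apply: hvs.
have -> : Num.sqrt L * Num.sqrt n%:R * Num.sqrt ((m%:R - 1) / m%:R)
    = n%:R * Num.sqrt c / m%:R.
  set x := _ * _ * _.
  have hx0 : 0 <= x by rewrite /x !mulr_ge0 ?sqrtr_ge0.
  have hy0 : 0 <= n%:R * Num.sqrt c / (m%:R : R).
    by rewrite !mulr_ge0 ?sqrtr_ge0 ?invr_ge0 ?ltW.
  rewrite -(ger0_norm hx0) -(ger0_norm hy0) -!sqrtr_sqr; congr Num.sqrt.
  have hq : (0:R) <= (m%:R - 1) / m%:R by rewrite divr_ge0 ?subr_ge0 ?ler0n ?(ltW hm1R).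
  rewrite /x !exprMn !sqr_sqrtr ?ler0n ?(ltW hL0) // /c.
  have hE' : E = m%:R * (m%:R - 1) / 2.
    by rewrite -hE2 -mulr_natr; field.
  rewrite hE'; field.
  by rewrite gt_eqF //= gt_eqF.
by rewrite ler_pM2r ?invr_gt0.
Qed.
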